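(* Let $G$ be a connected bipartite graph with bipartition $(A,B)$, with $|A|,|B|\ge2$, that admits no 1-join. Then there exists $a\in A$ such that $G\setminus N[a]$ is connected.
   Context: $N[a]$ is the set consisting of $a$ and its neighbours. $G$ admits a 1-join $(V_1,V_2)$ if $(V_1,V_2)$ is a partition of $V(G)$ with $|V_1|,|V_2|\ge2$ and there are $X_1\subseteq V_1$, $X_2\subseteq V_2$ such that $X_1$ is complete to $X_2$ and there are no other edges between $V_1$ and $V_2$. *)

(* Defs.v *)
From mathcomp Require Import all_boot.
Set Implicit Arguments. Unset Strict Implicit. Unset Printing Implicit Defensive.

Definition simple_graph (T : finType) (e : rel T) : Prop :=
  symmetric e /\ irreflexive e.

Definition closed_nbhd (T : finType) (e : rel T) (a : T) : {set T} :=
  a |: [set x | e a x].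

Definition induced_rel (T : finType) (e : rel T) (S : {set T}) : rel T :=
  [rel u v | [&& u \in S, v \in S & e u v]].

Definition connected_on (T : finType) (e : rel T) (S : {set T}) : Prop :=
  forall x y, x \in S -> y \in S -> connect (induced_rel e S) x y.

Definition connected_graph (T : finType) (e : rel T) : Prop :=
  connected_on e [set: T].

Definition bipartition (T : finType) (e : rel T) (A B : {set T}) : Prop :=
  [/\ A :&: B = set0, A :|: B = [set: T] &
      forall u v, e u v -> (u \in A) && (v \in B) || (u \in B) && (v \in A)].

Definition is_one_join (T : finType) (e : rel T) (V1 V2 : {set T}) : Prop :=
  [/\ V1 :&: V2 = set0, V1 :|: V2 = [set: T], 1 < #|V1|, 1 < #|V2| &
      exists X1 X2 : {set T},
        [/\ X1 \subset V1, X2 \subset V2 &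
            forall u v, u \in V1 -> v \in V2 -> e u v = (u \in X1) && (v \in X2)]].

Definition admits_one_join (T : finType) (e : rel T) : Prop :=
  exists V1 V2 : {set T}, is_one_join e V1 V2.

(* Main.v *)
Require Import Defs.
From mathcomp Require Import all_boot.
From Stdlib Require Import Classical.

Lemma connect_restr (T : finType) (r1 r2 : rel T) x :
  (forall y z, connect r1 x y -> r1 y z -> r2 y z) ->
  forall y, connect r1 x y -> connect r2 x y.
Proof.
move=> H y /connectP [p pth ->].
suff : forall s, connect r1 x s -> connect r2 x s -> path r1 s p ->
  connect r2 x (last s p) by apply; rewrite ?connect0.
elim: p {pth} => [|z p IH] s c1 c2 //= /andP [rsz pz].
apply: IH => //.
  by apply: connect_trans c1 (connect1 rsz).
by apply: connect_trans c2 (connect1 (H _ _ c1 rsz)).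
Qed.

Lemma connect_in (T : finType) (e : rel T) (S : {set T}) x y :
  x \in S -> connect (induced_rel e S) x y -> y \in S.
Proof.
move=> xS /connectP [p pth ->]; move: pth.
case/lastP: p => [|p z] //=.
by rewrite rcons_path last_rcons => /andP [_ /and3P [_ ->]].
Qed.

Lemma inS (T : finType) (e : rel T) a z :
  (z \in ~: closed_nbhd e a) = (z != a) && ~~ e a z.
Proof. by rewrite /closed_nbhd !inE negb_or. Qed.

Theorem mainTheorem19 (T : finType) (e : rel T) (A B : {set T}) :
  simple_graph e ->
  connected_graph e ->
  bipartition e A B ->
  1 < #|A| -> 1 < #|B| ->
  ~ admits_one_join e ->
  exists2 a, a \in A & connected_on e (~: closed_nbhd e a).
Proof.
move=> [sym irr] conn [hAB hU hE] cA cB nJ.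
have AB : forall u, u \in A -> u \in B -> False.
  move=> u uA uB; have : u \in A :&: B by rewrite inE uA uB.
  by rewrite hAB inE.
have AorB : forall u, (u \in A) || (u \in B).
  move=> u; have : u \in A :|: B by rewrite hU inE.
  by rewrite inE.
have eA : forall u v, u \in A -> e u v -> v \in B.
  move=> u v uA /hE /orP [/andP [_ ->] //|/andP [uB _]].
  by case: (AB u uA uB).
have eB : forall u v, u \in B -> e u v -> v \in A.
  move=> u v uB /hE /orP [/andP [uA _]|/andP [_ ->] //].
  by case: (AB u uA uB).
have symr : forall S, symmetric (induced_rel e S).
  by move=> S u v; rewrite /induced_rel /= sym andbCA.
case: (classic (exists2 a, a \in A & connected_on e (~: closed_nbhd e a))) => [h|Hn]; first exact: h.
have H : forall a, a \in A -> ~ connected_on e (~: closed_nbhd e a).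
  by move=> a aA Hc; apply: Hn; exists a.
have [a0 a0A] : exists a0, a0 \in A.
  by apply/set0Pn; rewrite -card_gt0 ltnW.
have [y0 y0S] : exists y, y \in ~: closed_nbhd e a0.
  apply: NNPP => ny; apply: (H a0 a0A) => y z yS _; case: ny; by exists y.
pose S a := ~: closed_nbhd e a.
pose P (p : T * T) := (p.1 \in A) && (p.2 \in S p.1).
pose comp (p : T * T) := [set y | connect (induced_rel e (S p.1)) p.2 y].
have P0 : P (a0, y0) by rewrite /P /= a0A.
case: (arg_maxnP (fun p => #|comp p|) P0) => [[a x]] /andP /= [aA xS] maxF.
set C := comp (a, x).
have F1 : forall y, y \in C -> y \in S a.
  by move=> y; rewrite inE => /(connect_in _ _ _ _ _ xS).
have F2 : forall c z, c \in C -> z \in S a -> e c z -> z \in C.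
  move=> c z cC zS ecz; move: (cC); rewrite !inE => cx.
  apply: connect_trans cx (connect1 _); apply/and3P; split => //; exact: F1.
have xC : x \in C by rewrite inE connect0.
have [w wS wC] : exists2 w, w \in S a & w \notin C.
  apply: NNPP => nw; apply: (H a aA) => y z yS zS.
  have yC : y \in C by apply: NNPP => yC; apply: nw; exists y => //; apply/negP.
  have zC : z \in C by apply: NNPP => zC; apply: nw; exists z => //; apply/negP.
  rewrite !inE /= in yC zC; rewrite (sym_connect_sym (symr _)) in yC.
  exact: connect_trans yC zC.
pose V1 := [set v | (v \in C) || [exists c in C, e c v]].
have F3 : forall u, u \in V1 -> u \notin C -> (u \in B) && e a u.
  move=> u; rewrite inE => /orP [->//|/existsP [c /andP [cC ecu]]] uC.
  have uS : u \notin S a by apply: contra uC => uS; apply: F2 ecu.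
  have cS := F1 c cC.
  rewrite inS negb_and !negbK in uS; rewrite inS in cS.
  case/orP: uS => [/eqP ua|eau]; first by rewrite -ua sym ecu andbF in cS.
  by rewrite eau (eA a).
exfalso; apply: nJ; exists V1, (~: V1); split.
- by rewrite setICr.
- by rewrite setUCr.
- have : connect (induced_rel e setT) x a by apply: conn; rewrite inE.
  case/connectP => [[|w1 p]] /=.
    by move=> _ xa; rewrite inS xa eqxx in xS.
  case/andP => /and3P [_ _ exw] _ _.
  apply/card_gt1P; exists x, w1; split.
  + by rewrite inE xC.
  + by rewrite inE; apply/orP; right; apply/existsP; exists x; rewrite xC.
  + by apply: contraTneq exw => ->; rewrite irr.
- apply/card_gt1P; exists a, w; split.
  + rewrite in_setC inE negb_or; apply/andP; split.
    by apply: contraT; rewrite negbK => aC; move: (F1 a aC); rewrite inS eqxx.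
    apply/existsPn => c; apply/negP => /andP [cC eca].
    by move: (F1 c cC); rewrite inS sym eca andbF.
  + rewrite in_setC inE negb_or wC /=.
    apply/existsPn => c; apply/negP => /andP [cC ecw].
    by move: wC; rewrite (F2 c w).
  + by rewrite eq_sym; move: wS; rewrite inS => /andP [].
exists (V1 :\: C), (~: V1 :&: A); split.
- by apply: subsetDl.
- by apply: subsetIl.
move=> u v uV vV; apply/idP/idP.
- move=> euv.
  have uC : u \notin C.
    rewrite in_setC in vV; apply: contra vV => uC; rewrite inE; apply/orP; right.
    by apply/existsP; exists u; rewrite uC.
  have /andP [uB _] := F3 u uV uC.
  by rewrite in_setD in_setI uC (eB u v uB euv) uV vV.
case/andP => /setDP [_ uC]; rewrite inE => /andP [_ vA].
have /andP [uB eau] := F3 u uV uC.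
rewrite in_setC in vV.
case: (eqVneq v a) => [->|va]; first by rewrite sym.
apply: contraT => nuv.
have vS : forall c, c \in C -> c \in S v.
  move=> c cC; rewrite inS; apply/andP; split.
    by apply: contraNneq vV => cv; rewrite inE -cv cC.
  apply: contra vV => evc; rewrite inE; apply/orP; right.
  by apply/existsP; exists c; rewrite cC /= sym.
have uSv : u \in S v.
  rewrite inS; apply/andP; split; last by rewrite sym.
  by apply: contraTneq uB => ->; apply/negP => vB; exact: AB v vA vB.
have Pv : P (v, x) by rewrite /P /= vA vS.
have CC : forall y, y \in C -> connect (induced_rel e (S v)) x y.
  move=> y; rewrite inE; apply: connect_restr => y1 z1 c1 r.
  have z1C : z1 \in C by rewrite inE (connect_trans c1 (connect1 r)).
  move/and3P: r => [_ _ eyz].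
  by apply/and3P; split => //; apply: vS => //; rewrite inE.
have sub : u |: C \subset comp (v, x).
  apply/subsetP => y; rewrite in_setU1 => /orP [/eqP ->|yC]; last first.
    by rewrite inE; apply: CC.
  move: uV; rewrite inE (negbTE uC) /= => /existsP [c /andP [cC ecu]].
  rewrite inE; apply: connect_trans (CC c cC) (connect1 _).
  by apply/and3P; split => //; apply: vS.
have := leq_trans (subset_leq_card sub) (maxF _ Pv).
by rewrite cardsU1 uC add1n ltnn.
Qed.
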